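(* Let $a_2 = i$, $a_0 = \frac{1-i}{2}$, or $a_2=-i$, $a_0=\frac{1+i}{2}$. Then the second-order recursion $$z_n = \frac{a_2 z_{n-2} + z_{n-1} + a_0}{z_{n-2}},$$ that is, $$z_n = \frac{2i\, z_{n-2} + 2 z_{n-1} + (1-i)}{2 z_{n-2}} \quad\text{or}\quad z_n = \frac{-2i\, z_{n-2} + 2 z_{n-1} + (1+i)}{2 z_{n-2}},$$ is periodic with period $8$: for the sequence defined from indeterminates $z_1,z_2$ one has $z_9 = z_1$ and $z_{10} = z_2$ in $\mathbb{C}(z_1,z_2)$, hence $z_{n+8}=z_n$ for all $n\ge 1$.
   Context: Let $z_1,z_2$ be independent indeterminates over $\mathbb{C}$, and define $z_n \in \mathbb{C}(z_1,z_2)$ for $n\ge 3$ by the given recursion. A second-order recursion is said to be periodic with period $k$ if all iterates $z_3,z_4,\dots$ are well-defined elements of $\mathbb{C}(z_1,z_2)$ (no denominator is identically zero) and $z_{k+1}=z_1$, $z_{k+2}=z_2$; equivalently, every complex sequence satisfying the recursion for which no denominator vanishes satisfies $z_{n+k}=z_n$ for all $n$. *)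

(* Defs.v *)
From HB Require Import structures.
From mathcomp Require Import all_boot all_order all_algebra.
From mathcomp Require Import complex fraction.
Set Implicit Arguments. Unset Strict Implicit. Unset Printing Implicit Defensive.
Import Order.TTheory GRing.Theory Num.Theory.
Local Open Scope ring_scope.
Local Open Scope quotient_scope.

Definition ratfun2 (R : rcfType) := {fraction {poly {poly R[i]}}}.

(* The two indeterminates: z1 is the inner variable, z2 the outer one. *)
Definition ind_z1 (R : rcfType) : ratfun2 R := tofrac (('X : {poly R[i]})%:P).
Definition ind_z2 (R : rcfType) : ratfun2 R := tofrac ('X : {poly {poly R[i]}}).
Definition constF (R : rcfType) (c : R[i]) : ratfun2 R := tofrac ((c%:P)%:P).

(* Pairs (z_{n+1}, z_{n+2}) of the recursion
   z_n = (a2 z_{n-2} + z_{n-1} + a0) / z_{n-2}  over a field F. *)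
Fixpoint rec_pair (F : fieldType) (a2 a0 x1 x2 : F) (n : nat) : F * F :=
  match n with
  | 0 => (x1, x2)
  | n'.+1 => let p := rec_pair a2 a0 x1 x2 n' in
             (p.2, (a2 * p.1 + p.2 + a0) / p.1)
  end.

(* z_n for n >= 1 (1-based indexing, z_1 = x1, z_2 = x2). *)
Definition rec_seq (F : fieldType) (a2 a0 x1 x2 : F) (n : nat) : F :=
  (rec_pair a2 a0 x1 x2 n.-1).1.

(* Periodicity with period k in the sense of the paper: all iterates are
   well defined (no denominator z_{n}, n >= 1, is zero) and z_{k+1} = z_1,
   z_{k+2} = z_2. *)
Definition periodic_rec (F : fieldType) (a2 a0 x1 x2 : F) (k : nat) : Prop :=
  (forall n, (1 <= n)%N -> rec_seq a2 a0 x1 x2 n != 0) /\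
  rec_seq a2 a0 x1 x2 k.+1 = rec_seq a2 a0 x1 x2 1 /\
  rec_seq a2 a0 x1 x2 k.+2 = rec_seq a2 a0 x1 x2 2.

(* Main.v *)
Require Import Defs.
From HB Require Import structures.
From mathcomp Require Import all_boot all_order all_algebra.
From mathcomp Require Import complex fraction.
From mathcomp Require Import ring zify.
Import GRing.Theory Num.Theory.
Local Open Scope ring_scope.

Section S.
Variable R : rcfType.
Local Notation C := (R[i]).
Local Notation F := (ratfun2 R).
Local Notation P2 := ({poly {poly C}}).

Definition evp (x0 y0 : C) (p : P2) : C := (p.[y0%:P]).[x0].

Lemma evpD x0 y0 p q : evp x0 y0 (p + q) = evp x0 y0 p + evp x0 y0 q.
Proof. by rewrite /evp !hornerD. Qed.
Lemma evpM x0 y0 p q : evp x0 y0 (p * q) = evp x0 y0 p * evp x0 y0 q.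
Proof. by rewrite /evp !hornerM. Qed.
Lemma evpN x0 y0 p : evp x0 y0 (- p) = - evp x0 y0 p.
Proof. by rewrite /evp !hornerN. Qed.
Lemma evpC x0 y0 c : evp x0 y0 (c%:P%:P) = c.
Proof. by rewrite /evp !hornerC. Qed.
Lemma evpX1 x0 y0 : evp x0 y0 (('X : {poly C})%:P) = x0.
Proof. by rewrite /evp hornerC hornerX. Qed.
Lemma evpX2 x0 y0 : evp x0 y0 ('X : P2) = y0.
Proof. by rewrite /evp hornerX hornerC. Qed.
Lemma evp1 x0 y0 : evp x0 y0 1 = 1.
Proof. by rewrite /evp !hornerC. Qed.

Lemma evp_nz x0 y0 p : evp x0 y0 p != 0 -> p != 0.
Proof. by apply: contraNneq => ->; rewrite /evp !horner0. Qed.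

Definition Good (x0 y0 : C) (f : F) (v : C) :=
  exists p q : P2, [/\ evp x0 y0 q != 0, f = tofrac p / tofrac q & evp x0 y0 p = v * evp x0 y0 q].

Lemma good_poly x0 y0 p : Good x0 y0 (tofrac p) (evp x0 y0 p).
Proof. exists p, 1; split; rewrite ?evp1 ?oner_eq0 ?tofrac1 ?divr1 ?mulr1 //. Qed.

Lemma good_nz x0 y0 f v : Good x0 y0 f v -> v != 0 -> f != 0.
Proof.
case=> p [q] [nq -> ep] nv.
have qn : tofrac q != 0 by rewrite tofrac_eq0 (@evp_nz x0 y0).
have pn : tofrac p != 0 by rewrite tofrac_eq0 (@evp_nz x0 y0) // ep mulf_neq0.
by apply: mulf_neq0; [exact: pn | rewrite invr_eq0; exact: qn].
Qed.

Lemma goodD x0 y0 f g u v : Good x0 y0 f u -> Good x0 y0 g v -> Good x0 y0 (f + g) (u + v).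
Proof.
case=> p1 [q1] [n1 -> e1] [p2 [q2] [n2 -> e2]].
have t1 : tofrac q1 != 0 by rewrite tofrac_eq0 (@evp_nz x0 y0).
have t2 : tofrac q2 != 0 by rewrite tofrac_eq0 (@evp_nz x0 y0).
exists (p1 * q2 + p2 * q1), (q1 * q2); split.
- by rewrite evpM mulf_neq0.
- rewrite (addf_div _ _ t1 t2) !tofracD !tofracM; reflexivity.
- by rewrite !evpD !evpM e1 e2; timeout 20 ring.
Qed.

Lemma goodM x0 y0 f g u v : Good x0 y0 f u -> Good x0 y0 g v -> Good x0 y0 (f * g) (u * v).
Proof.
case=> p1 [q1] [n1 -> e1] [p2 [q2] [n2 -> e2]].
have t1 : tofrac q1 != 0 by rewrite tofrac_eq0 (@evp_nz x0 y0).
have t2 : tofrac q2 != 0 by rewrite tofrac_eq0 (@evp_nz x0 y0).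
exists (p1 * p2), (q1 * q2); split.
- by rewrite evpM mulf_neq0.
- rewrite mulf_div !tofracM; reflexivity.
- by rewrite !evpM e1 e2; timeout 20 ring.
Qed.

Lemma goodV x0 y0 f u : Good x0 y0 f u -> u != 0 -> Good x0 y0 (f^-1) (u^-1).
Proof.
case=> p1 [q1] [n1 -> e1] nu.
have t1 : tofrac q1 != 0 by rewrite tofrac_eq0 (@evp_nz x0 y0).
have np : evp x0 y0 p1 != 0 by rewrite e1 mulf_neq0.
have t2 : tofrac p1 != 0 by rewrite tofrac_eq0 (@evp_nz x0 y0).
exists q1, p1; split => //.
- rewrite invf_div; reflexivity.
- by rewrite e1; timeout 20 field; rewrite nu.
Qed.

Lemma good_a x0 y0 c : Good x0 y0 (constF c) c.
Proof. by rewrite -{2}(evpC x0 y0 c); apply: good_poly. Qed.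
Lemma good_x x0 y0 : Good x0 y0 (ind_z1 R) x0.
Proof. by rewrite -{2}(evpX1 x0 y0); apply: good_poly. Qed.
Lemma good_y x0 y0 : Good x0 y0 (ind_z2 R) y0.
Proof. by rewrite -{2}(evpX2 x0 y0); apply: good_poly. Qed.

End S.
Arguments evp {R}.
Arguments Good {R}.
Arguments good_a {R}.
Arguments good_x {R}.
Arguments good_y {R}.
Arguments goodM {R x0 y0 f g u v}.
Arguments goodD {R x0 y0 f g u v}.
Arguments goodV {R x0 y0 f u}.
Arguments good_nz {R x0 y0 f v}.

Inductive ex := EA | EX | EY | ENat of nat | EAdd of ex & ex | EMul of ex & ex | EOpp of ex.

Fixpoint evalE (T : ringType) (a x y : T) (e : ex) : T :=
  match e with
  | EA => a | EX => x | EY => y | ENat n => n%:R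
  | EAdd e1 e2 => evalE T a x y e1 + evalE T a x y e2
  | EMul e1 e2 => evalE T a x y e1 * evalE T a x y e2
  | EOpp e1 => - evalE T a x y e1
  end.
Arguments evalE {T}.

Fixpoint gi (x0 y0 : int) (e : ex) : int * int :=
  match e with
  | EA => (0, 1) | EX => (x0, 0) | EY => (y0, 0) | ENat n => (n%:Z, 0)
  | EAdd e1 e2 => let (u1, v1) := gi x0 y0 e1 in let (u2, v2) := gi x0 y0 e2 in (u1 + u2, v1 + v2)
  | EMul e1 e2 => let (u1, v1) := gi x0 y0 e1 in let (u2, v2) := gi x0 y0 e2 in
                  (u1 * u2 - v1 * v2, u1 * v2 + v1 * u2)
  | EOpp e1 => let (u1, v1) := gi x0 y0 e1 in (- u1, - v1)
  end%R.

Definition X0 : int := 3.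
Definition Y0 : int := 5.

Section Gen.
Variables (F : fieldType) (a x y : F).
Hypothesis Ha : a ^+ 2 = -1.
Hypothesis Hnz : forall e, gi X0 Y0 e != (0, 0) -> evalE a x y e != 0.

Ltac reify t :=
  lazymatch t with
  | a => constr:(EA) | x => constr:(EX) | y => constr:(EY)
  | ?u + ?v => let r1 := reify u in let r2 := reify v in constr:(EAdd r1 r2)
  | ?u * ?v => let r1 := reify u in let r2 := reify v in constr:(EMul r1 r2)
  | - ?u => let r1 := reify u in constr:(EOpp r1)
  | 1 => constr:(ENat 1)
  | 0 => constr:(ENat 0)
  | ?n%:R => constr:(ENat n)
  end.

Ltac nzt := lazymatch goal with
  | |- is_true (?t != _) => let e := reify t in change (evalE a x y e != 0); apply: Hnz; vm_compute; reflexivity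
  end.

Ltac split_and := repeat (apply/andP; split).

Lemma per1 : (rec_pair a ((1 - a) / 2) x y 8).1 = x.
Proof. rewrite /=. field: Ha; split_and; nzt. Qed.
Lemma per2 : (rec_pair a ((1 - a) / 2) x y 8).2 = y.
Proof. rewrite /=. field: Ha; split_and; nzt. Qed.
End Gen.

Section Conc.
Variable R : rcfType.
Local Notation C := (R[i]).
Local Notation F := (ratfun2 R).
Local Notation P2 := ({poly {poly C}}).
Variable a2 : C.
Hypothesis Hc : a2 ^+ 2 = -1.

Lemma evalE_tofrac e :
  evalE (constF a2) (ind_z1 R) (ind_z2 R) e =
  tofrac (evalE (a2%:P%:P : P2) (('X : {poly C})%:P) 'X e).
Proof.
elim: e => [| | |n|e1 IH1 e2 IH2|e1 IH1 e2 IH2|e1 IH1] /=.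
- reflexivity.
- reflexivity.
- reflexivity.
- by rewrite rmorph_nat.
- by rewrite IH1 IH2 tofracD.
- by rewrite IH1 IH2 tofracM.
- by rewrite IH1 tofracN.
Qed.

Lemma evalE_evp x0 y0 e :
  evp x0 y0 (evalE (a2%:P%:P : P2) (('X : {poly C})%:P) 'X e) = evalE a2 x0 y0 e.
Proof.
elim: e => [| | |n|e1 IH1 e2 IH2|e1 IH1 e2 IH2|e1 IH1] /=.
- exact: evpC.
- exact: evpX1.
- exact: evpX2.
- by rewrite -polyC_natr -polyC_natr evpC.
- by rewrite evpD IH1 IH2.
- by rewrite evpM IH1 IH2.
- by rewrite evpN IH1.
Qed.

Lemma evalE_gi x0 y0 e :
  evalE a2 x0%:~R y0%:~R e = (gi x0 y0 e).1%:~R + (gi x0 y0 e).2%:~R * a2.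
Proof.
elim: e => [| | |n|e1 IH1 e2 IH2|e1 IH1 e2 IH2|e1 IH1] /=.
- by rewrite mul1r add0r.
- by rewrite mul0r addr0.
- by rewrite mul0r addr0.
- by rewrite mul0r addr0.
- rewrite IH1 IH2; case: (gi x0 y0 e1) => u1 v1; case: (gi x0 y0 e2) => u2 v2 /=.
  rewrite !intrD; ring.
- rewrite IH1 IH2; case: (gi x0 y0 e1) => u1 v1; case: (gi x0 y0 e2) => u2 v2 /=.
  rewrite !intrD !intrM !intrN; ring: Hc.
- rewrite IH1; case: (gi x0 y0 e1) => u1 v1 /=.
  rewrite !intrN; ring.
Qed.

Lemma gauss_nz (u v : int) : (u, v) != (0, 0) -> u%:~R + v%:~R * a2 != 0.
Proof.
move=> nz; apply/eqP => H.
have E : (u%:~R + v%:~R * a2) * (u%:~R - v%:~R * a2) = (u * u + v * v)%:~R :> C.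
  rewrite intrD !intrM; ring: Hc.
move: E; rewrite H mul0r => /esym /eqP; rewrite intr_eq0 => /eqP h.
have hu : u = 0 by nia.
have hv : v = 0 by nia.
by move: nz; rewrite hu hv eqxx.
Qed.

Lemma Hnz_conc e : gi X0 Y0 e != (0, 0) ->
  evalE (constF a2) (ind_z1 R) (ind_z2 R) e != 0.
Proof.
move=> h; rewrite evalE_tofrac tofrac_eq0; apply: (@evp_nz _ X0%:~R Y0%:~R).
rewrite evalE_evp evalE_gi; exact: gauss_nz.
Qed.

End Conc.

Lemma rec_shift (F : fieldType) (a b x y : F) k n :
  rec_pair a b x y (k + n) = rec_pair a b (rec_pair a b x y k).1 (rec_pair a b x y k).2 n.
Proof.
elim: n => [|n IH]; first by rewrite addn0; case: (rec_pair a b x y k).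
by rewrite addnS /= IH.
Qed.

Section Const.
Variable R : rcfType.
Lemma constFM (c d : R[i]) : constF (c * d) = constF c * constF d.
Proof. by rewrite /constF !polyCM tofracM. Qed.
Lemma constFB (c d : R[i]) : constF (c - d) = constF c - constF d.
Proof. by rewrite /constF !polyCB tofracB. Qed.
Lemma constFN (c : R[i]) : constF (- c) = - constF c.
Proof. by rewrite /constF !polyCN tofracN. Qed.
Lemma constF1 : constF (1 : R[i]) = 1.
Proof. by rewrite /constF !polyC1 tofrac1. Qed.
Lemma constF_nat n : constF (n%:R : R[i]) = n%:R.
Proof. by rewrite /constF !rmorph_nat. Qed.
End Const.

Theorem mainTheorem1 (R : rcfType) (a2 a0 : R[i]) :
  (a2 = 'i%C /\ a0 = (1 - 'i%C) / 2) \/ (a2 = - 'i%C /\ a0 = (1 + 'i%C) / 2) ->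
  periodic_rec (constF a2) (constF a0) (ind_z1 R) (ind_z2 R) 8 /\
  (forall n, (1 <= n)%N ->
     rec_seq (constF a2) (constF a0) (ind_z1 R) (ind_z2 R) (n + 8) =
     rec_seq (constF a2) (constF a0) (ind_z1 R) (ind_z2 R) n).
Proof.
move=> H.
have [Hc Ha0] : a2 ^+ 2 = -1 /\ a0 = (1 - a2) / 2.
  case: H => [[-> ->]|[-> ->]]; split; rewrite ?sqrrN ?sqr_i //.
  by rewrite opprK.
set A := constF a2; set B := constF a0; set X := ind_z1 R; set Y := ind_z2 R.
have HaF : A ^+ 2 = -1.
  by rewrite /A expr2 -constFM -expr2 Hc constFN constF1.
have Hnz := @Hnz_conc R a2 Hc.
have nz2 : (2 : ratfun2 R) != 0 := Hnz (ENat 2) isT.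
have nz2C : (2 : R[i]) != 0 by rewrite pnatr_eq0.
have HB : B = (1 - A) / 2.
  have cV : constF (2^-1 : R[i]) = 2^-1.
    apply: (mulIf nz2); rewrite (mulVf nz2) -(constF_nat R 2) -constFM (mulVf nz2C).
    exact: constF1.
  by rewrite /B Ha0 constFM constFB constF1 cV.
have P1 := @per1 _ A X Y HaF Hnz.
have P2 := @per2 _ A X Y HaF Hnz.
rewrite -HB in P1 P2.
have P8 : rec_pair A B X Y 8 = (X, Y).
  by case: (rec_pair A B X Y 8) P1 P2 => u v /= -> ->.
have [w [Hw wnz]] : exists w : R[i], w ^+ 2 = a2 * w + w + a0 /\ w != 0.
  have [w Hw] := @solve_monicpoly _ 2 (nth 0 [:: a0; a2 + 1]) isT.
  exists w; split.
    by rewrite Hw !big_ord_recl big_ord0 /= expr0 expr1 mulr1 addr0; ring.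
  apply/eqP => w0; move: Hw; rewrite w0 expr0n /= !big_ord_recl big_ord0 /=.
  rewrite expr0 mulr1 expr0n /= mulr0 !addr0 => /esym; rewrite Ha0 => /eqP.
  rewrite mulf_eq0 invr_eq0 (negPf nz2C) orbF subr_eq0 => /eqP h1.
  move: Hc; rewrite -h1 expr1n => /eqP; rewrite -subr_eq0 opprK => /eqP h2.
  by move: nz2C; rewrite -h2 eqxx.
have G : forall n, Good w w (rec_pair A B X Y n).1 w /\ Good w w (rec_pair A B X Y n).2 w.
  elim=> [|n [G1 G2]] /=; first by split; [exact: good_x | exact: good_y].
  split; first exact: G2.
  have := goodM (goodD (goodD (goodM (good_a w w a2) G1) G2) (good_a w w a0)) (goodV G1 wnz).
  have -> : (a2 * w + w + a0) * w^-1 = w.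
    by rewrite -Hw expr2 mulfK.
  by [].
split.
  split.
    move=> n _; rewrite /rec_seq; exact: (good_nz (G n.-1).1 wnz).
  split.
    change ((rec_pair A B X Y 8).1 = (rec_pair A B X Y 0).1).
    by rewrite P8.
  change ((rec_pair A B X Y (8 + 1)).1 = Y).
  by rewrite rec_shift P8.
move=> n n1.
change ((rec_pair A B X Y (n + 8).-1).1 = (rec_pair A B X Y n.-1).1).
have -> : ((n + 8).-1 = 8 + n.-1)%N by lia.
by rewrite rec_shift P8.
Qed.
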